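(* Let $S$ be a finite set of states and $N=I=\{1,\ldots,n\}$ a set of individuals, and let $p_1,\ldots,p_n\in\Delta(S)$ be individual beliefs. A profile $(\rho_1,\ldots,\rho_n)\in\Delta(S)^n$ is a (pure-strategy) Nash equilibrium of the log utility preference revelation game $(\Delta(S),U_{p_i})_{i\in N}$ if and only if there is a parimutuel equilibrium with equal wealth $(\rho,\mathbf{x})$ of the parimutuel market $(\mathbb{R}^S_+,p_i)_{i\in N}$ such that \[\rho_{is}=\frac{\rho_s x_{is}}{\sum_{s'\in S}\rho_{s'}x_{is'}}\quad\text{for all } i\in N,\ s\in S.\] In particular, in that case $\frac{1}{n}\sum_{i=1}^n\rho_i=\rho$.
   Context: $\Delta(S)$ is the set of probability distributions on $S$. The log utility preference revelation game for the profile $(p_1,\ldots,p_n)$ is the normal-form game in which each player $i\in N$ has strategy space $\Delta(S)$ and payoff function \[U_{p_i}(\rho_1,\ldots,\rho_n)=\sum_{s\in S}p_{i,s}\log\Big(\frac{1}{n}\sum_{j=1}^n\rho_{j,s}\Big),\] with the convention $0\times\log 0=0$ (payoffs may equal $-\infty$). (This is the payoff obtained when society aggregates reported beliefs by the symmetric linear opinion pool $f(\rho_1,\ldots,\rho_n)=\frac1n\sum_j\rho_j$ and then chooses the portfolio maximizing expected log utility over $\{x\in\mathbb{R}^S_+:\sum_s x_s=1\}$, whose optimum is $x=f(\rho)$.) The parimutuel market $(\mathbb{R}^S_+,p_i)_{i\in N}$ consists of consumers $i\in N$, each with consumption set $\mathbb{R}^S_+$ and linear utility $x\mapsto p_i\cdot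 x$. A parimutuel equilibrium with equal wealth is a pair $(\rho,\mathbf{x})$ with $\rho\in\Delta(S)$ (a price vector) and $\mathbf{x}=(x_1,\ldots,x_n)\in(\mathbb{R}^S_+)^N$ such that (1) for each $i$, $\rho\cdot x_i\le 1/n$ and $p_i\cdot x_i\ge p_i\cdot y$ for every $y\in\mathbb{R}^S_+$ with $\rho\cdot y\le 1/n$; and (2) $\sum_{i=1}^n x_i=(1,\ldots,1)$. *)

(* Defs.v *)
From HB Require Import structures.
From mathcomp Require Import all_boot all_order all_algebra.
From mathcomp Require Import all_classical all_reals all_analysis.
Set Implicit Arguments. Unset Strict Implicit. Unset Printing Implicit Defensive.
Import Order.TTheory GRing.Theory Num.Theory.
Local Open Scope ring_scope.

Section Defs.
Variables (R : realType) (S : finType).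

Definition is_distr (q : S -> R) : Prop :=
  (forall s, 0 <= q s) /\ \sum_(s : S) q s = 1.

Definition dotS (a b : S -> R) : R := \sum_(s : S) a s * b s.

Definition pool (n : nat) (rho : 'I_n -> S -> R) : S -> R :=
  fun s => n%:R^-1 * \sum_(j < n) rho j s.

(* p_s * log(a_s) with convention 0 * log 0 = 0 (and p_s*log 0 = -oo if p_s > 0) *)
Definition plog (ps a : R) : \bar R :=
  if ps == 0 then 0%E
  else if 0 < a then (ps * ln a)%:E else -oo%E.

Definition log_payoff (n : nat) (p : S -> R) (rho : 'I_n -> S -> R) : \bar R :=
  (\sum_(s : S) plog (p s) (pool rho s))%E.

Definition deviate (n : nat) (rho : 'I_n -> S -> R) (i : 'I_n) (sigma : S -> R)
  : 'I_n -> S -> R := fun j => if j == i then sigma else rho j.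

Definition nash_eq (n : nat) (p : 'I_n -> S -> R) (rho : 'I_n -> S -> R) : Prop :=
  (forall i, is_distr (rho i)) /\
  forall i sigma, is_distr sigma ->
    (log_payoff (p i) (deviate rho i sigma) <= log_payoff (p i) rho)%E.

Definition parimutuel_eq (n : nat) (p : 'I_n -> S -> R)
    (price : S -> R) (x : 'I_n -> S -> R) : Prop :=
  is_distr price /\
  (forall i s, 0 <= x i s) /\
  (forall i, dotS price (x i) <= n%:R^-1 /\
     forall y : S -> R, (forall s, 0 <= y s) -> dotS price y <= n%:R^-1 ->
       dotS (p i) y <= dotS (p i) (x i)) /\
  (forall s, \sum_(i < n) x i s = 1).

End Defs.

(* Main.v *)
Require Import Defs.
From HB Require Import structures.
From mathcomp Require Import all_boot all_order all_algebra.
From mathcomp Require Import all_classical all_reals all_analysis.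
From mathcomp Require Import ring lra.
Import Order.TTheory GRing.Theory Num.Theory.
Set Implicit Arguments. Unset Strict Implicit.
Local Open Scope ring_scope.


Section Aux.
Variables (R : realType) (S : finType).

Lemma ln_le_sub1 (x : R) : 0 < x -> ln x <= x - 1.
Proof. move=> x0; have := expR_ge1Dx (ln x); rewrite lnK ?posrE //; lra. Qed.

Lemma lnL1 (a b : R) : 0 < a -> 0 < b -> ln b - ln a <= b / a - 1.
Proof.
move=> a0 b0; rewrite -ln_div ?posrE //; apply: ln_le_sub1; exact: divr_gt0.
Qed.

Lemma lnL2 (a b : R) : 0 < a -> 0 < b -> (b - a) / b <= ln b - ln a.
Proof.
move=> a0 b0; have := @lnL1 b a b0 a0.
have -> : (b - a) / b = 1 - a / b by field; rewrite gt_eqF.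
lra.
Qed.

Lemma sum_delta (F : S -> R) (s0 : S) : \sum_(s : S) F s * (s == s0)%:R = F s0.
Proof.
rewrite (bigD1 s0) //= eqxx mulr1 big1 ?addr0 // => s /negbTE ->; by rewrite mulr0.
Qed.

Definition g (ps a : R) : R := if ps == 0 then 0 else ps * ln a.

Lemma payoff_fin n (p : S -> R) (rho : 'I_n -> S -> R) :
  (forall s, p s != 0 -> 0 < pool rho s) ->
  log_payoff p rho = (\sum_(s : S) g (p s) (pool rho s))%:E.
Proof.
move=> H; rewrite /log_payoff -sumEFin; apply: eq_bigr => s _.
rewrite /plog /g; case: eqP => // /eqP h; by rewrite (H s h).
Qed.

Lemma payoff_ninf n (p : S -> R) (rho : 'I_n -> S -> R) s :
  p s != 0 -> pool rho s <= 0 -> log_payoff p rho = -oo%E.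
Proof.
move=> h h'; rewrite /log_payoff (bigD1 s) //= /plog (negbTE h) ltNge h' /=.
by rewrite addNye.
Qed.

Lemma pool_dev n (rho : 'I_n -> S -> R) i sigma s :
  pool (deviate rho i sigma) s = pool rho s + n%:R^-1 * (sigma s - rho i s).
Proof.
rewrite /pool (bigD1 i) //= [in RHS](bigD1 i) //= /deviate eqxx.
rewrite (eq_bigr (fun j => rho j s)); last by move=> j /negbTE ->.
ring.
Qed.

Lemma rho_le_pool n (rho : 'I_n -> S -> R) i s :
  (forall j, is_distr (rho j)) -> n%:R^-1 * rho i s <= pool rho s.
Proof.
move=> hd; rewrite /pool ler_wpM2l ?invr_ge0 ?ler0n //.
rewrite (bigD1 i) //= lerDl; apply: sumr_ge0 => j _; exact: (hd j).1.
Qed.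

Lemma pool_distr n (rho : 'I_n -> S -> R) :
  (0 < n)%N -> (forall j, is_distr (rho j)) -> is_distr (pool rho).
Proof.
move=> n0 hd; split.
  move=> s; rewrite /pool mulr_ge0 ?invr_ge0 ?ler0n //.
  apply: sumr_ge0 => j _; exact: (hd j).1.
rewrite /pool -mulr_sumr exchange_big /=.
rewrite (eq_bigr (fun _ => 1)); last by move=> j _; exact: (hd j).2.
rewrite sumr_const card_ord -[_ *+ n]mulr_natl mulVf //.
by rewrite mulr1 pnatr_eq0 -lt0n.
Qed.

Lemma C_le0 (C D : R) : 0 <= D -> (forall t, 0 < t -> t < 1 -> C <= t * D) -> C <= 0.
Proof.
move=> D0 H; rewrite leNgt; apply/negP => C0.
have CD : 0 < C + D by lra.
have := H (C / (2 * (C + D))).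
have t0 : 0 < C / (2 * (C + D)) by apply: divr_gt0; lra.
have t1 : C / (2 * (C + D)) < 1.
  by rewrite ltr_pdivrMr; lra.
move=> /(_ t0 t1).
have -> : C / (2 * (C + D)) * D = C * (D / (2 * (C + D))) by field; lra.
have : D / (2 * (C + D)) < 1 by rewrite ltr_pdivrMr; lra.
nra.
Qed.

End Aux.


Section Par.
Variables (R : realType) (S : finType) (n : nat) (n_gt0 : (0 < n)%N)
  (p : 'I_n -> S -> R) (hp : forall i, is_distr (p i))
  (price : S -> R) (x : 'I_n -> S -> R) (hpe : parimutuel_eq p price x).

Lemma n_neq0 : (n%:R : R) != 0.
Proof. by rewrite pnatr_eq0 -lt0n. Qed.
Lemma n_gt0R : (0 : R) < n%:R.
Proof. by rewrite ltr0n. Qed.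

Lemma P1 i : dotS price (x i) = n%:R^-1.
Proof.
case: hpe => [[pr0 pr1] [x0 [opt clr]]].
have hs : \sum_(j < n) (n%:R^-1 - dotS price (x j)) = 0.
  rewrite sumrB sumr_const card_ord -[n%:R^-1 *+ n]mulr_natr mulVf ?n_neq0 //.
  rewrite /dotS exchange_big /=.
  rewrite (eq_bigr (fun s => price s)) ?pr1 ?subrr // => s _.
  by rewrite -mulr_sumr clr mulr1.
have h : forall j : 'I_n, true -> 0 <= n%:R^-1 - dotS price (x j).
  by move=> j _; rewrite subr_ge0; exact: (opt j).1.
have := psumr_eq0P h hs; move=> /(_ i isT) /=; lra.
Qed.

Lemma P23 i s : p i s <= n%:R * dotS (p i) (x i) * price s.
Proof.
case: hpe => [[pr0 pr1] [x0 [opt clr]]].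
have [_ optx] := opt i.
have pis0 := (hp i).1 s.
have [ps0|ps0] := eqVneq (price s) 0.
  rewrite ps0 mulr0.
  rewrite le_eqVlt ltNge pis0 orbF; apply/eqP.
  apply/eqP; apply: contraT => pn0.
  have pp : 0 < p i s by rewrite lt_def pn0 pis0.
  pose M := (dotS (p i) (x i) + 1) / p i s.
  have := optx (fun t => M * (t == s)%:R).
  have Hd : forall a : S -> R, dotS a (fun t => M * (t == s)%:R) = a s * M.
    move=> a; rewrite /dotS -(@sum_delta R S (fun t => a t * M) s).
    by apply: eq_bigr => t _; rewrite mulrA.
  rewrite !Hd ps0 mul0r invr_ge0 ler0n.
  have M0 : 0 <= M.
    rewrite /M divr_ge0 // addr_ge0 // /dotS sumr_ge0 // => t _.
    by rewrite mulr_ge0 // ?(hp i).1 ?x0.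
  move=> /(_ _ isT).
  have : (forall t : S, 0 <= M * (t == s)%:R) by move=> t; rewrite mulr_ge0.
  move=> h /(_ h).
  rewrite /M mulrCA mulfV ?mulr1; last by rewrite gt_eqF.
  lra.
have pp : 0 < price s by rewrite lt_def ps0 pr0.
pose y := fun t : S => (n%:R * price s)^-1 * (t == s)%:R.
have Hd : forall a : S -> R, dotS a y = a s * (n%:R * price s)^-1.
  move=> a; rewrite /dotS -(@sum_delta R S (fun t => a t * (n%:R * price s)^-1) s).
  by apply: eq_bigr => t _; rewrite /y mulrA.
have := optx y; rewrite !Hd.
have h1 : forall t, 0 <= y t.
  by move=> t; rewrite /y mulr_ge0 // invr_ge0 mulr_ge0 // ?ler0n // ltW.
have h2 : price s * (n%:R * price s)^-1 <= n%:R^-1.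
  rewrite invfM mulrCA mulfV ?mulr1 //; by rewrite gt_eqF.
move=> /(_ h1 h2).
rewrite ler_pdivrMr ?mulr_gt0 ?n_gt0R //.
by rewrite mulrCA mulrA.
Qed.


Lemma price_pos i s : p i s != 0 -> 0 < price s.
Proof.
move=> h; have := P23 i s; have := (hp i).1 s.
case: hpe => [[pr0 _] _]; have := pr0 s.
rewrite le_eqVlt => /orP [/eqP <-|//]; rewrite mulr0 => h1 h2.
by move: h; rewrite (@le_anti _ _ (p i s) 0) ?h1 ?h2 ?eqxx.
Qed.

Variable rho : 'I_n -> S -> R.
Hypothesis hrho : forall i s, rho i s = price s * x i s / dotS price (x i).

Lemma rhoE i s : rho i s = n%:R * (price s * x i s).
Proof. by rewrite hrho P1 invrK mulrC. Qed.

Lemma pool_eq : pool rho = price.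
Proof.
case: hpe => [_ [_ [_ clr]]].
apply: funext => s; rewrite /pool; under eq_bigr do rewrite rhoE.
by rewrite -mulr_sumr mulKf ?n_neq0 // -mulr_sumr clr mulr1.
Qed.

Lemma dot_ge0 i : 0 <= dotS (p i) (x i).
Proof.
case: hpe => [_ [x0 _]].
by rewrite /dotS sumr_ge0 // => t _; rewrite mulr_ge0 // (hp i).1.
Qed.

Lemma nash_of_par : nash_eq p rho.
Proof.
have pr0 : forall s, 0 <= price s by case: hpe => [[]].
have x0 : forall i s, 0 <= x i s by case: hpe => [_ []].
split.
  move=> i; split.
    by move=> s; rewrite rhoE mulr_ge0 ?ler0n // mulr_ge0.
  under eq_bigr do rewrite rhoE.
  by rewrite -mulr_sumr -/(dotS price (x i)) P1 mulfV ?n_neq0.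
move=> i sigma [sig0 sig1].
case: (boolP [exists s, (p i s != 0) && (pool (deviate rho i sigma) s <= 0)]).
  move/existsP => [s /andP [h1 h2]]; by rewrite (payoff_ninf h1 h2) leNye.
rewrite negb_exists => /forallP hall.
have hq' : forall s, p i s != 0 -> 0 < pool (deviate rho i sigma) s.
  by move=> s h; move: (hall s); rewrite h /= -ltNge.
have hq : forall s, p i s != 0 -> 0 < pool rho s.
  by move=> s h; rewrite pool_eq; exact: price_pos h.
rewrite (payoff_fin hq') (payoff_fin hq) lee_fin pool_eq.
set lam := n%:R * dotS (p i) (x i).
have lam0 : 0 <= lam by rewrite mulr_ge0 ?ler0n ?dot_ge0.
have term : forall s, g (p i s) (pool (deviate rho i sigma) s) - g (p i s) (price s)
   <= n%:R^-1 * (lam * sigma s - n%:R * (p i s * x i s)).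
  move=> s; rewrite /g; case: eqP => [->|/eqP pn0].
    by rewrite mul0r mulr0 !subr0 mulr_ge0 ?invr_ge0 ?ler0n // mulr_ge0.
  have qp := price_pos pn0.
  have q'p := hq' s pn0.
  have pp : 0 < p i s by rewrite lt_def pn0 (hp i).1.
  have h1 : p i s * ln (pool (deviate rho i sigma) s) - p i s * ln (price s)
      <= p i s * (pool (deviate rho i sigma) s / price s - 1).
    rewrite -mulrBr; apply: ler_wpM2l; first exact: ltW.
    exact: (lnL1 qp q'p).
  apply: (le_trans h1).
  have -> : p i s * (pool (deviate rho i sigma) s / price s - 1)
     = n%:R^-1 * (p i s / price s * sigma s - n%:R * (p i s * x i s)).
    rewrite pool_dev pool_eq rhoE; field.
    by rewrite n_neq0 gt_eqF.
  apply: ler_wpM2l; first by rewrite invr_ge0 ler0n.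
  apply: lerB => //; apply: ler_wpM2r => //.
  by rewrite ler_pdivrMr // P23.
suff : \sum_s (g (p i s) (pool (deviate rho i sigma) s) - g (p i s) (price s)) <= 0.
  by rewrite sumrB subr_le0.
apply: (le_trans (ler_sum _ (fun s _ => term s))).
rewrite -mulr_sumr sumrB -mulr_sumr -mulr_sumr sig1 -/(dotS (p i) (x i)).
by rewrite /lam mulr1 subrr mulr0.
Qed.

End Par.


Section Nash.
Variables (R : realType) (S : finType) (n : nat) (n_gt0 : (0 < n)%N)
  (p : 'I_n -> S -> R) (hp : forall i, is_distr (p i))
  (rho : 'I_n -> S -> R) (hn : nash_eq p rho).

Lemma nR_gt0 : (0 : R) < n%:R. Proof. by rewrite ltr0n. Qed.
Lemma nR_neq0 : (n%:R : R) != 0. Proof. by rewrite gt_eqF // nR_gt0. Qed.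
Lemma nRV_gt0 : (0 : R) < n%:R^-1. Proof. by rewrite invr_gt0 nR_gt0. Qed.

Lemma q_ge0 s : 0 <= pool rho s.
Proof. exact: (pool_distr n_gt0 hn.1).1. Qed.

Lemma N1 i s : p i s != 0 -> 0 < pool rho s.
Proof.
move=> h; have [hd hdev] := hn.
apply: contraT; rewrite -leNgt => hq.
have card : (0 < #|S|)%N by apply/card_gt0P; exists s.
pose sg := fun _ : S => (#|S|%:R : R)^-1.
have sgp : forall t, 0 < sg t by move=> t; rewrite /sg invr_gt0 ltr0n.
have sd : is_distr sg.
  split; first by move=> t; exact: ltW.
  by rewrite sumr_const -[LHS]mulr_natr mulVf // pnatr_eq0 -lt0n.
have := hdev i sg sd; rewrite (payoff_ninf h hq) leeNy_eq.
rewrite (@payoff_fin _ _ _ (p i) (deviate rho i sg)) //.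
move=> t _; rewrite pool_dev.
have := rho_le_pool i t hd; have := sgp t; have := nRV_gt0.
nra.
Qed.

Definition Acoef i : R :=
  \sum_(s : S) (if p i s == 0 then 0 else p i s * rho i s / pool rho s).

Lemma Acoef_ge0 i : 0 <= Acoef i.
Proof.
rewrite /Acoef sumr_ge0 // => s _; case: eqP => // _.
by rewrite divr_ge0 ?q_ge0 // mulr_ge0 ?(hp i).1 ?(hn.1 i).1.
Qed.

Lemma N2 i s0 : p i s0 <= Acoef i * pool rho s0.
Proof.
have [hd hdev] := hn.
have A0 := Acoef_ge0 i.
have [pz|pn0] := eqVneq (p i s0) 0.
  by rewrite pz mulr_ge0 ?q_ge0.
have pp : 0 < p i s0 by rewrite lt_def pn0 (hp i).1.
have qp := N1 pn0.
set A := Acoef i.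
suff : p i s0 - A * pool rho s0 <= 0 by lra.
apply: (@C_le0 _ _ (p i s0 + A * n%:R^-1)).
  apply: addr_ge0; [exact: ltW | apply: mulr_ge0 => //; exact: (ltW nRV_gt0)].
move=> t t0 t1.
pose sg := fun s : S => (1 - t) * rho i s + t * (s == s0)%:R.
have sd : is_distr sg.
  split.
    move=> s; rewrite /sg addr_ge0 // mulr_ge0 //; try lra.
      exact: (hd i).1.
  rewrite /sg big_split /= -!mulr_sumr (hd i).2.
  rewrite (eq_bigr (fun s => 1 * (s == s0)%:R)); last by move=> s _; rewrite mul1r.
  rewrite (@sum_delta _ _ (fun _ => 1) s0); lra.
set q := pool rho.
set q' := pool (deviate rho i sg).
have q'E : forall s, q' s = q s + t * (n%:R^-1 * (s == s0)%:R) - t * (n%:R^-1 * rho i s).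
  by move=> s; rewrite /q' pool_dev /sg -/q; ring.
have hlow : forall s, p i s != 0 -> (1 - t) * q s <= q' s /\ 0 < q' s.
  move=> s h; have qs := N1 h.
  have h1 := rho_le_pool i s hd.
  have h2 : 0 <= n%:R^-1 * (s == s0)%:R :> R by rewrite mulr_ge0 // ltW // nRV_gt0.
  rewrite -/q in qs h1.
  have m1 : 0 <= t * (q s - n%:R^-1 * rho i s) by rewrite mulr_ge0 ?subr_ge0 // ltW.
  have m2 : 0 <= t * (n%:R^-1 * (s == s0)%:R) by rewrite mulr_ge0 // ltW.
  have m3 : 0 < (1 - t) * q s by rewrite mulr_gt0 //; lra.
  rewrite q'E; split; nra.
have hq'p : forall s, p i s != 0 -> 0 < q' s by move=> s /hlow [].
have := hdev i sg sd.
rewrite (payoff_fin hq'p) (payoff_fin (@N1 i)) lee_fin => hle.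
pose a := fun s => (if p i s == 0 then 0 else p i s / q' s) * (s == s0)%:R.
pose b := fun s => if p i s == 0 then 0 else p i s * rho i s / q' s.
have term : forall s, n%:R^-1 * t * (a s - b s) <= g (p i s) (q' s) - g (p i s) (q s).
  move=> s; rewrite /a /b /g; case: eqP => [_|/eqP h].
    by rewrite mul0r !subr0 mulr0.
  have [_ q'p] := hlow s h; have qs := N1 h.
  have ps : 0 < p i s by rewrite lt_def h (hp i).1.
  have := lnL2 qs q'p.
  have -> : n%:R^-1 * t * (p i s / q' s * (s == s0)%:R - p i s * rho i s / q' s)
       = p i s * ((q' s - q s) / q' s).
    have e : q' s - q s = t * (n%:R^-1 * (s == s0)%:R) - t * (n%:R^-1 * rho i s) by rewrite q'E; ring.
    rewrite e; field; by rewrite gt_eqF // nR_neq0.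
  rewrite -(mulrBr (p i s)) => hl; apply: ler_wpM2l => //; exact: ltW.
have hsum : n%:R^-1 * t * (\sum_s a s - \sum_s b s) <= 0.
  rewrite -sumrB mulr_sumr.
  apply: (le_trans (ler_sum _ (fun s _ => term s))).
  by rewrite sumrB subr_le0.
have ab : \sum_s a s <= \sum_s b s.
  have : 0 < n%:R^-1 * t :> R by rewrite mulr_gt0 // nRV_gt0.
  move: hsum; set N := n%:R^-1 * t; nra.
have aE : \sum_s a s = p i s0 / q' s0.
  by rewrite /a (@sum_delta _ _ (fun s => if p i s == 0 then 0 else p i s / q' s) s0) (negbTE pn0).
have bA : (1 - t) * \sum_s b s <= A.
  rewrite mulr_sumr; apply: ler_sum => s _; rewrite /b; case: eqP => [_|/eqP h].
    by rewrite mulr0.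
  have [hl q'p] := hlow s h; have qs := N1 h.
  set c := p i s * rho i s.
  have c0 : 0 <= c by rewrite mulr_ge0 ?(hp i).1 ?(hd i).1.
  rewrite -subr_ge0.
  have -> : c / q s - (1 - t) * (c / q' s) = c * (q' s - (1 - t) * q s) / (q s * q' s).
    by field; rewrite !gt_eqF.
  rewrite -/q in qs; apply: divr_ge0; first by apply: mulr_ge0 => //; rewrite subr_ge0.
  by apply: mulr_ge0; apply: ltW.
have q'up : q' s0 <= q s0 + t * n%:R^-1.
  rewrite q'E eqxx mulr1.
  have : 0 <= t * (n%:R^-1 * rho i s0).
    apply: mulr_ge0; first exact: ltW. apply: mulr_ge0; [exact: (ltW nRV_gt0) | exact: (hd i).1].
  lra.
have [_ q'0] := hlow s0 pn0.
set X := p i s0 / q' s0.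
have XE : X * q' s0 = p i s0 by rewrite /X mulfVK // gt_eqF.
have X0 : 0 <= X by apply: divr_ge0; apply: ltW.
set Bs := \sum_s b s.
have XB : X <= Bs by move: ab; rewrite aE.
have h1 : p i s0 * (1 - t) <= X * (1 - t) * (q s0 + t * n%:R^-1).
  rewrite -XE mulrAC; apply: ler_wpM2l; last exact: q'up.
  rewrite mulr_ge0 //; lra.
have h2 : X * (1 - t) * (q s0 + t * n%:R^-1) <= A * (q s0 + t * n%:R^-1).
  apply: ler_wpM2r; first by rewrite addr_ge0 ?q_ge0 // mulr_ge0 // ltW // ?nRV_gt0.
  apply: le_trans bA; rewrite mulrC; apply: ler_wpM2l => //; lra.
have := le_trans h1 h2; lra.
Qed.

End Nash.


Theorem proposition3 (R : realType) (S : finType) (n : nat) (n_gt0 : (0 < n)%N)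
    (p : 'I_n -> S -> R) (hp : forall i, is_distr (p i)) :
  (forall rho : 'I_n -> S -> R,
     nash_eq p rho <->
     exists (price : S -> R) (x : 'I_n -> S -> R),
       parimutuel_eq p price x /\
       forall i s, rho i s = price s * x i s / dotS price (x i))
  /\
  (forall (rho : 'I_n -> S -> R) (price : S -> R) (x : 'I_n -> S -> R),
     nash_eq p rho -> parimutuel_eq p price x ->
     (forall i s, rho i s = price s * x i s / dotS price (x i)) ->
     pool rho = price).
Proof.
have nR0 : (n%:R : R) != 0 by rewrite pnatr_eq0 -lt0n.
have nRp : (0 : R) < n%:R by rewrite ltr0n.
split; last first.
  move=> rho price x _ hpe hrho; exact: (pool_eq n_gt0 hpe hrho).
move=> rho; split; last first.
  move=> [price [x [hpe hrho]]]; exact: (nash_of_par n_gt0 hp hpe hrho).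
move=> hn; have hd := hn.1.
have qge0 := q_ge0 n_gt0 hn.
pose x := fun (i : 'I_n) s => if 0 < pool rho s then rho i s / (n%:R * pool rho s) else n%:R^-1.
have key : forall i s, pool rho s * x i s = n%:R^-1 * rho i s.
  move=> i s; rewrite /x; case: ifP => h.
    field; by rewrite nR0 gt_eqF.
  have q0 : pool rho s = 0 by apply/eqP; rewrite eq_le qge0 andbT leNgt h.
  have := rho_le_pool i s hd; rewrite q0 mul0r.
  have : 0 <= n%:R^-1 * rho i s by rewrite mulr_ge0 ?invr_ge0 ?ler0n ?(hd i).1.
  lra.
have dotE : forall i, dotS (pool rho) (x i) = n%:R^-1.
  move=> i; rewrite /dotS; under eq_bigr do rewrite key.
  by rewrite -mulr_sumr (hd i).2 mulr1.
exists (pool rho), x; split; last first.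
  move=> i s; rewrite key dotE; field; by rewrite nR0.
split; first exact: pool_distr.
split.
  move=> i s; rewrite /x; case: ifP => h.
    by rewrite divr_ge0 ?(hd i).1 // mulr_ge0 ?ler0n // ltW.
  by rewrite invr_ge0 ler0n.
split.
  move=> i; split; first by rewrite dotE.
  move=> y y0 hy.
  have AE : Acoef p rho i = n%:R * dotS (p i) (x i).
    rewrite /Acoef /dotS mulr_sumr; apply: eq_bigr => s _.
    case: eqP => [->|/eqP h]; first by rewrite mul0r mulr0.
    have qp := N1 n_gt0 hn h.
    rewrite /x qp; field; by rewrite nR0 gt_eqF.
  have lam : forall s, p i s <= n%:R * dotS (p i) (x i) * pool rho s.
    by move=> s; rewrite -AE; exact: N2.
  have l0 : 0 <= n%:R * dotS (p i) (x i) by rewrite -AE Acoef_ge0.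
  apply: (@le_trans _ _ (n%:R * dotS (p i) (x i) * dotS (pool rho) y)).
    rewrite /dotS mulr_sumr; apply: ler_sum => s _.
    by rewrite mulrA; apply: ler_wpM2r => //; exact: lam.
  apply: (@le_trans _ _ (n%:R * dotS (p i) (x i) * n%:R^-1)).
    by apply: ler_wpM2l.
  by rewrite mulrAC mulfV // mul1r.
move=> s; rewrite /x; case: (boolP (0 < pool rho s)) => h.
  have hs : \sum_(j < n) rho j s = n%:R * pool rho s.
    by rewrite /pool mulrA mulfV // mul1r.
  rewrite -mulr_suml hs mulfV //; by rewrite mulf_neq0 // gt_eqF.
rewrite sumr_const card_ord -[LHS]mulr_natr mulVf //.
Qed.
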